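(* Consider any execution of Algorithm A with $m=n$ registers. Suppose that at time $\tau$ all entries of $\mathit{REG}$ equal a quadruplet $X$ with $X.\mathit{lvl}=\mathtt{up}$ and $X.\mathit{cfl}=\mathtt{false}$, and that at some time $\tau'$ all entries of $\mathit{REG}$ equal a quadruplet $Y$ with $Y.rd\ge X.rd$. Then $Y.\mathit{val}=X.\mathit{val}$.
   Context: Quadruplets, lexicographic order: a quadruplet is $\langle rd,\mathit{lvl},\mathit{cfl},\mathit{val}\rangle$ with $rd\in\mathbb{N}$, $\mathit{lvl}\in\{\mathtt{down}<\mathtt{up}\}$, $\mathit{cfl}\in\{\mathtt{false}<\mathtt{true}\}$, $\mathit{val}$ in a totally ordered value set with a least default $\bot$; quadruplets are totally ordered lexicographically. For a nonempty finite set $T$ of quadruplets with lexicographic maximum $\langle r,\ell,c,v\rangle$, $\mathrm{sup}(T)=\langle r,\ell,\mathit{conflict}(T),v\rangle$ where $\mathit{conflict}(T)$ holds iff some element of $T$ of round $r$ has conflict field $\mathtt{true}$, or the elements of $T$ of round $r$ carry at least two distinct values. Model and Algorithm A: $n$ anonymous asynchronous processes (any number may crash) share an atomic snapshot object $\mathit{REG}[1..m]$ of multi-writer registers, each initially $\langle 0,\mathtt{down},\mathtt{false},\bot\rangle$, with atomic operations $\mathrm{snapshot}()$ and $\mathrm{write}(x,X)$; executions are interleavings of atomic steps, one per time instant. A process proposing $v$ repeats forever: $\mathit{view}\leftarrow\mathrm{snapshot}()$; then (1) if all entries equal $\langle r,\mathtt{up},\mathtt{false},w\rangle$ with $r>0$,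 it returns (decides) $w$; (2) else if all entries equal $\langle r,\mathtt{down},\mathtt{false},w\rangle$ with $r>0$, it writes $\langle r+1,\mathtt{up},\mathtt{false},w\rangle$ into $\mathit{REG}[1]$; (3) else if all entries equal $\langle r,\ell,\mathtt{true},w\rangle$ with $r>0$, it writes $\langle r+1,\mathtt{down},\mathtt{false},w\rangle$ into $\mathit{REG}[1]$; (4) otherwise it computes $S=\mathrm{sup}(\{\mathit{view}[1],\dots,\mathit{view}[m],\langle 1,\mathtt{down},\mathtt{false},v\rangle\})$, lets $x$ be the smallest index with $\mathit{view}[x]\neq S$, and writes $S$ into $\mathit{REG}[x]$. *)

(* Defs.v *)
(* Model of Algorithm A (anonymous consensus from an atomic
   snapshot object REG[1..m]), here with m = n registers, indexed by 'I_n
   (paper index k+1 = Rocq index k). *)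
From HB Require Import structures.
From mathcomp Require Import all_boot all_order.
Set Implicit Arguments. Unset Strict Implicit. Unset Printing Implicit Defensive.
Import Order.TTheory.
Local Open Scope order_scope.

Section Algo.
Variables (d : Order.disp_t) (V : orderType d) (bot : V).

Definition quad := (nat * bool * bool * V)%type.
Definition mkq (r : nat) (l c : bool) (v : V) : quad := (r, l, c, v).
Definition rd (q : quad) : nat := q.1.1.1.
Definition lvl (q : quad) : bool := q.1.1.2.
Definition cfl (q : quad) : bool := q.1.2.
Definition qval (q : quad) : V := q.2.
Definition down := false.
Definition up := true.

Definition qlt (a b : quad) : bool :=
  (rd a < rd b)%N ||
  ((rd a == rd b) &&
   ((~~ lvl a && lvl b) ||
    ((lvl a == lvl b) &&
     ((~~ cfl a && cfl b) ||
      ((cfl a == cfl b) && (qval a < qval b)))))).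

Definition qmax (a b : quad) : quad := if qlt a b then b else a.

(* sup of the nonempty finite set {h} \cup t *)
Definition qsup (h : quad) (t : seq quad) : quad :=
  let mx := foldl qmax h t in
  let rs := [seq q <- h :: t | rd q == rd mx] in
  let conflict :=
    has cfl rs || has (fun q1 => has (fun q2 => qval q1 != qval q2) rs) rs in
  mkq (rd mx) (lvl mx) conflict (qval mx).

Definition init_quad : quad := mkq 0 down false bot.

Variable n : nat.

Definition regs := 'I_n -> quad.

Definition common (view : regs) : option quad :=
  let vs := [seq view i | i <- enum 'I_n] in
  match vs with
  | [::] => None
  | q :: _ => if all (fun q' => q' == q) vs then Some q else None
  end.

Inductive pstate :=
| Snap                          (* next step: snapshot *)
| Wr of nat & quad              (* next step: write quad into REG[index] *)
| Decided of V.

Definition after_snapshot (v : V) (view : regs) : pstate :=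
  match common view with
  | Some q =>
      if (0 < rd q)%N && lvl q && ~~ cfl q then Decided (qval q)
      else if (0 < rd q)%N && ~~ lvl q && ~~ cfl q then
        Wr 0 (mkq (rd q).+1 up false (qval q))
      else if (0 < rd q)%N && cfl q then
        Wr 0 (mkq (rd q).+1 down false (qval q))
      else
        let S := qsup (mkq 1 down false v) [seq view i | i <- enum 'I_n] in
        Wr (find (fun i : 'I_n => view i != S) (enum 'I_n)) S
  | None =>
      let S := qsup (mkq 1 down false v) [seq view i | i <- enum 'I_n] in
      Wr (find (fun i : 'I_n => view i != S) (enum 'I_n)) S
  end.

Record config := Config { REG : regs; PC : 'I_n -> pstate }.

Definition init_config : config :=
  Config (fun _ => init_quad) (fun _ => Snap).

Definition step (prop : 'I_n -> V) (p : 'I_n) (c : config) : config :=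
  match PC c p with
  | Snap =>
      Config (REG c)
             (fun j => if j == p then after_snapshot (prop p) (REG c) else PC c j)
  | Wr x q =>
      Config (fun i => if nat_of_ord i == x then q else REG c i)
             (fun j => if j == p then Snap else PC c j)
  | Decided _ => c
  end.

(* configuration at time t of the execution where at time instant t the
   process sched t takes a step (crashed processes are simply never
   scheduled again; steps of decided processes are no-ops) *)
Fixpoint config_at (prop : 'I_n -> V) (sched : nat -> 'I_n) (t : nat) : config :=
  match t with
  | 0 => init_config
  | t'.+1 => step prop (sched t') (config_at prop sched t')
  end.

End Algo.

(* Main.v *)
Require Import Defs.
From HB Require Import structures.
From mathcomp Require Import all_boot all_order.
Import Order.TTheory.
Local Open Scope order_scope.

Set Implicit Arguments. Unset Strict Implicit.
Section Proof10.
Local Open Scope nat_scope.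
Variables (d : Order.disp_t) (V : orderType d) (bot : V).
Variables (n : nat) (n_pos : 0 < n) (prop : 'I_n -> V) (sched : nat -> 'I_n).

Local Notation Q := (quad V).
Local Notation C t := (config_at bot prop sched t).

Definition AllEq t (z : Q) := forall i : 'I_n, REG (C t) i = z.

Lemma common_all (view : 'I_n -> Q) z : common view = Some z -> forall i, view i = z.
Proof.
rewrite /common; case E: [seq view i | i <- enum 'I_n] => [|q s] //.
case: ifP => // /allP H [<-] i; apply/eqP/H; rewrite -E; apply: map_f.
by rewrite mem_enum.
Qed.

Lemma after_cases v (view : 'I_n -> Q) x q : after_snapshot v view = Wr x q ->
  (exists z, (forall i, view i = z) /\ rd q = (rd z).+1 /\ qval q = qval z /\
       (lvl q -> ~~ lvl z /\ ~~ cfl z)) \/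
  q = qsup (mkq 1 down false v) [seq view i | i <- enum 'I_n].
Proof.
rewrite /after_snapshot; case E: (common view) => [z|]; last by case=> _ <-; right.
have Hz := @common_all view z E.
case: ifP => // H1; case: ifP => H2.
  case=> _ <-; left; exists z; split=> //; split=> //; split=> //.
  by move: H2 => /andP[/andP[_ ->] ->].
case: ifP => H3.
  by case=> _ <-; left; exists z.
by case=> _ <-; right.
Qed.

Definition rk_le (a b : Q) := (rd a < rd b) || (rd a == rd b) && (lvl a ==> lvl b).

Lemma rk_le_refl a : rk_le a a.
Proof. by rewrite /rk_le eqxx implybb orbT. Qed.

Lemma rk_le_trans a b c : rk_le a b -> rk_le b c -> rk_le a c.
Proof.
rewrite /rk_le; case/orP => [h1|/andP[/eqP e1 i1]]; case/orP => [h2|/andP[/eqP e2 i2]].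
- by rewrite (ltn_trans h1 h2).
- by rewrite -e2 h1.
- by rewrite e1 h2.
- apply/orP; right; rewrite e1 e2 eqxx /=; move: i1 i2.
  by case: (lvl a); case: (lvl b).
Qed.

Lemma rk_qmax a b : rk_le a (qmax a b) && rk_le b (qmax a b).
Proof.
rewrite /qmax /qlt /rk_le.
case: (ltngtP (rd a) (rd b)) => E /=.
- by rewrite E eqxx !implybb !orbT.
- by rewrite E ltnn eqxx implybb.
- case: ifP => H; rewrite E ltnn eqxx /= implybb ?andbT //; move: H;
  by case: (lvl a); case: (lvl b).
Qed.

Lemma foldl_rk h (t : seq Q) x : x \in h :: t -> rk_le x (foldl (@qmax _ V) h t).
Proof.
elim: t h x => [|y t IH] h x /=; first by rewrite inE => /eqP ->; apply: rk_le_refl.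
have /andP[Ha Hb] := rk_qmax h y.
rewrite !inE => /orP[/eqP ->|/orP[/eqP ->|Hx]].
- apply: rk_le_trans Ha (IH (qmax h y) (qmax h y) _); by rewrite inE eqxx.
- apply: rk_le_trans Hb (IH (qmax h y) (qmax h y) _); by rewrite inE eqxx.
- by apply: IH; rewrite inE Hx orbT.
Qed.

Lemma foldl_mem h (t : seq Q) : foldl (@qmax _ V) h t \in h :: t.
Proof.
elim: t h => [|y t IH] h /=; first by rewrite inE.
have := IH (qmax h y); rewrite !inE; case/orP => [/eqP ->|->]; last by rewrite !orbT.
by rewrite /qmax; case: ifP => _; rewrite eqxx ?orbT.
Qed.

Definition Pkv k (w : V) (q : Q) := (k < rd q) || (rd q == k) && (cfl q || (qval q == w)).
Definition Pup k (q : Q) := (k < rd q) || (rd q == k) && lvl q.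

Lemma qsupE h (t : seq Q) :
  let M := foldl (@qmax _ V) h t in
  let rs := [seq q <- h :: t | rd q == rd M] in
  rd (qsup h t) = rd M /\ lvl (qsup h t) = lvl M /\ qval (qsup h t) = qval M /\
  cfl (qsup h t) = has (@cfl _ V) rs ||
     has (fun q1 => has (fun q2 => qval q1 != qval q2) rs) rs.
Proof. by []. Qed.

Lemma sup_Pkv k w h (t : seq Q) g : g \in t -> Pkv k w g -> Pkv k w (qsup h t).
Proof.
move=> gt; rewrite /Pkv; have [-> [_ [-> ->]]] := qsupE h t.
set M := foldl (@qmax _ V) h t.
have gin : g \in h :: t by rewrite inE gt orbT.
have Mm : M \in h :: t by apply: foldl_mem.
have := @foldl_rk h t g gin; rewrite -/M /rk_le.
case/orP => [lt|/andP[/eqP e _]].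
  case/orP => [lk|/andP[/eqP <- _]]; first by rewrite (ltn_trans lk lt).
  by rewrite lt.
rewrite -e; case/orP => [->//|/andP[-> Hc]]; apply/orP; right.
set rs := [seq q <- h :: t | rd q == rd g].
have grs : g \in rs by rewrite mem_filter eqxx gin.
have Mrs : M \in rs by rewrite mem_filter e eqxx Mm.
case/orP: Hc => [Hc|/eqP Hw].
  by rewrite andTb; apply/orP; left; apply/orP; left; apply/hasP; exists g.
rewrite andTb; case Ew: (qval M == w); first by rewrite orbT.
apply/orP; left; apply/orP; right; apply/hasP; exists M => //.
by apply/hasP; exists g => //; rewrite Hw Ew.
Qed.

Lemma sup_Pup k h (t : seq Q) g : g \in t -> Pup k g -> Pup k (qsup h t).
Proof.
move=> gt; rewrite /Pup; have [-> [-> _]] := qsupE h t.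
set M := foldl (@qmax _ V) h t.
have gin : g \in h :: t by rewrite inE gt orbT.
have := @foldl_rk h t g gin; rewrite -/M /rk_le.
case/orP => [lt|/andP[/eqP e Hl]].
  case/orP => [lk|/andP[/eqP <- _]]; first by rewrite (ltn_trans lk lt).
  by rewrite lt.
rewrite -e; case/orP => [->//|/andP[-> Hc]].
by rewrite /= (implyP Hl Hc) orbT.
Qed.

Definition closedP (P : Q -> bool) :=
  forall (v : V) (view : 'I_n -> Q), (exists i, P (view i)) ->
    forall x q, after_snapshot v view = Wr x q -> P q.

Lemma closedP_gen (P : Q -> bool) k :
  (forall q, P q -> k <= rd q) -> (forall q, k < rd q -> P q) ->
  (forall h (t : seq Q) g, g \in t -> P g -> P (qsup h t)) -> closedP P.
Proof.
move=> H1 H2 Hs v view [i Pi] x q /after_cases [[z [Hz [Hr _]]]|->].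
  by apply: H2; rewrite Hr ltnS; apply: H1; rewrite -(Hz i).
by apply: Hs Pi; apply: map_f; rewrite mem_enum.
Qed.

Lemma closed_Pkv k w : closedP (Pkv k w).
Proof.
apply: (@closedP_gen _ k).
- by move=> q; rewrite /Pkv; case/orP=> [/ltnW//|/andP[/eqP -> _]].
- by move=> q; rewrite /Pkv => ->.
- by move=> h t g; apply: sup_Pkv.
Qed.

Lemma closed_Pup k : closedP (Pup k).
Proof.
apply: (@closedP_gen _ k).
- by move=> q; rewrite /Pup; case/orP=> [/ltnW//|/andP[/eqP -> _]].
- by move=> q; rewrite /Pup => ->.
- by move=> h t g; apply: sup_Pup.
Qed.

Definition badpc (P : Q -> bool) (s : pstate V) :=
  if s is Wr _ q then ~~ P q else false.

Lemma invA P (cP : closedP P) t :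
  (exists i, P (REG (C t) i)) -> exists p, ~~ badpc P (PC (C t) p).
Proof.
elim: t => [|t IH] /=; first by move=> _; exists (Ordinal n_pos).
rewrite /step; case E: (PC (C t) (sched t)) => [|x q|w] /= Hex.
- exists (sched t); rewrite eqxx.
  case E2: (after_snapshot _ _) => [|x q|w] //=.
  by rewrite negbK; apply: cP E2.
- by exists (sched t); rewrite eqxx.
- by apply: IH.
Qed.

Definition nbad P (c : config V n) := #|[pred p : 'I_n | badpc P (PC c p)]|.
Definition ngood P (c : config V n) := #|[pred i : 'I_n | P (REG c i)]|.

Lemma invB P (cP : closedP P) tau (Hall : forall i, P (REG (C tau) i)) t :
  tau <= t -> nbad P (C t) < ngood P (C t).
Proof.
have base : nbad P (C tau) < ngood P (C tau).
  have -> : ngood P (C tau) = n.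
    by rewrite /ngood -[RHS]card_ord; apply: eq_card => i; rewrite !inE Hall.
  have [p Hp] := invA cP (ex_intro _ (Ordinal n_pos) (Hall _)).
  rewrite /nbad; set A := [pred p : 'I_n | badpc P (PC (C tau) p)].
  have hc := cardC A; rewrite card_ord in hc.
  apply: (@leq_trans (#|A| + 1)); first by rewrite addn1.
  rewrite -[X in _ <= X]hc leq_add2l; apply/card_gt0P; exists p.
  by rewrite !inE.
elim: t => [|t IH]; first by rewrite leqn0 => /eqP <-.
rewrite leq_eqVlt => /orP[/eqP <- //|]; rewrite ltnS => /IH {}IH.
rewrite /= /step; case E: (PC (C t) (sched t)) => [|x q|w] //=.
-
  rewrite /nbad /ngood /= in IH *.
  set A := [pred p : 'I_n | _].
  have -> : #|A| = #|[pred p : 'I_n | badpc P (PC (C t) p)]|; last by [].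
  apply: eq_card => j; rewrite !inE; case: eqP => // ->; rewrite E /=.
  case E2: (after_snapshot _ _) => [|x q|w] //=.
  rewrite (cP _ _ _ _ _ E2) //.
  have : 0 < #|[pred i : 'I_n | P (REG (C t) i)]| by apply: leq_ltn_trans IH.
  by case/card_gt0P => i; rewrite inE => Hi; exists i.
-
  rewrite /nbad /ngood /= in IH *.
  set bad := [pred p : 'I_n | badpc P (PC (C t) p)] in IH.
  set good := [pred i : 'I_n | P (REG (C t) i)] in IH.
  set bad' := [pred p : 'I_n | _].
  set good' := [pred i : 'I_n | _].
  case Pq: (P q).
  + have h1 : #|bad'| <= #|bad|.
      apply: subset_leq_card; apply/subsetP => j; rewrite !inE.
      by case: eqP => // _.
    have h2 : #|good| <= #|good'|.
      apply: subset_leq_card; apply/subsetP => j; rewrite !inE.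
      by case: eqP.
    exact: leq_trans (leq_ltn_trans h1 IH) h2.
  + have hb : #|bad| = #|bad'|.+1.
      rewrite (cardD1 (sched t)) [sched t \in bad]inE E /= Pq add1n; congr _.+1.
      by apply: eq_card => j; rewrite !inE; case: eqP.
    have hg : #|good| <= #|good'|.+1.
      case: (ltnP x n) => hx.
        rewrite (cardD1 (Ordinal hx)) -add1n leq_add ?leq_b1 //.
        apply: subset_leq_card; apply/subsetP => j; rewrite !inE.
        case/andP => hj Pj; case: eqP => // ej.
        by move: hj; rewrite -val_eqE /= ej eqxx.
      apply: leqW; apply: subset_leq_card; apply/subsetP => j; rewrite !inE.
      case: eqP => // ej; move: (ltn_ord j); rewrite ej => /leq_trans/(_ hx).
      by rewrite ltnn.
    by rewrite -ltnS -hb; apply: leq_trans IH _.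
Qed.

Lemma persistEq P (cP : closedP P) tau z1 t z2 :
  AllEq tau z1 -> P z1 -> tau <= t -> AllEq t z2 -> P z2.
Proof.
move=> h1 p1 ht h2.
have Hall : forall i, P (REG (C tau) i) by move=> i; rewrite h1.
have := invB cP Hall ht; rewrite /ngood => /(leq_ltn_trans (leq0n _)).
by case/card_gt0P => i; rewrite inE h2.
Qed.

Definition Orig t (q : Q) : Prop :=
  (rd q = 0 /\ lvl q = down) \/ (rd q = 1 /\ lvl q = down) \/
  exists s z, s <= t /\ AllEq s z /\ (rd z).+1 = rd q /\ qval z = qval q /\
    (lvl q -> ~~ lvl z /\ ~~ cfl z).

Lemma Orig_mono t t' q : t <= t' -> Orig t q -> Orig t' q.
Proof.
move=> tt' [H|[H|[s [z [hs H]]]]]; [by left|by right; left|].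
by right; right; exists s, z; split=> //; apply: leq_trans tt'.
Qed.

Lemma Orig_ext t (q q' : Q) : rd q = rd q' -> lvl q = lvl q' -> qval q = qval q' ->
  Orig t q -> Orig t q'.
Proof.
move=> e1 e2 e3 [H|[H|[s [z [hs [Hz [H1 [H2 H3]]]]]]]].
- by left; rewrite -e1 -e2.
- by right; left; rewrite -e1 -e2.
- by right; right; exists s, z; rewrite -e1 -e2 -e3.
Qed.

Definition Inv t := (forall i, Orig t (REG (C t) i)) /\
  (forall p x q, PC (C t) p = Wr x q -> Orig t q).

Lemma inv_all t : Inv t.
Proof.
elim: t => [|t [IH1 IH2]].
  by split=> [i|p x q //]; left.
have mono : forall q, Orig t q -> Orig t.+1 q by move=> q; apply: Orig_mono.
rewrite /Inv /= /step; case E: (PC (C t) (sched t)) => [|x q|w] //=.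
- split=> [i|p x q]; first by apply: mono.
  case: eqP => _; last by move/IH2; apply: mono.
  move/after_cases => [[z [Hz [H1 [H2 H3]]]]|->].
    by right; right; exists t, z; split=> //; split=> //; split.
  rewrite /qsup /=.
  have := foldl_mem (mkq 1 down false (prop (sched t))) [seq REG (C t) i | i <- enum 'I_n].
  set M := foldl _ _ _; rewrite inE => /orP[/eqP ->|/mapP [i _ ->]].
    by right; left.
  by apply: mono; apply: Orig_ext (IH1 i).
- split=> [i|p x' q'].
    by case: eqP => _; apply: mono; [apply: IH2 E|apply: IH1].
  by case: eqP => // _ /IH2; apply: mono.
- by split=> [i|p x q /IH2]; [apply: mono|apply: mono].
Qed.

Lemma origin_up tau X : AllEq tau X -> lvl X ->
  exists s z, s <= tau /\ AllEq s z /\ (rd z).+1 = rd X /\ qval z = qval X /\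
    ~~ lvl z /\ ~~ cfl z.
Proof.
move=> h lX; have [H _] := inv_all tau.
have := H (Ordinal n_pos); rewrite h.
case=> [[_ l]|[[_ l]|[s [z [hs [Hz [H1 [H2 H3]]]]]]]]; first 1 [by rewrite l in lX].
  by rewrite l in lX.
by exists s, z; have [? ?] := H3 lX.
Qed.

Lemma eqval s z s' z' : AllEq s z -> AllEq s' z' -> rd z = rd z' ->
  ~~ cfl z -> ~~ cfl z' -> qval z = qval z'.
Proof.
wlog le : s z s' z' / s <= s'.
  move=> W h h' e c c'; case: (leqP s s') => hs; first exact: W hs h h' e c c'.
  by symmetry; apply: W (ltnW hs) h' h (esym e) c' c.
move=> h h' e c c'.
have := persistEq (@closed_Pkv (rd z) (qval z)) h _ le h'.
rewrite /Pkv e ltnn eqxx /= (negbTE c') /= => H.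
by apply/esym/eqP; apply: H; rewrite eqxx orbT.
Qed.

Lemma backward tau X s Y : AllEq tau X -> ~~ cfl X -> AllEq s Y -> s <= tau ->
  rd X <= rd Y -> qval Y = qval X.
Proof.
move=> hX cX hY hs le.
have := persistEq (@closed_Pkv (rd Y) (qval Y)) hY _ hs hX.
rewrite /Pkv ltnn !eqxx orbT /= [rd Y < rd X]ltnNge le /= (negbTE cX) /=.
by move=> /(_ isT) /andP[_ /eqP].
Qed.

Lemma forward tau X : AllEq tau X -> lvl X -> ~~ cfl X ->
  forall k Y t, rd Y = k -> AllEq t Y -> rd X <= rd Y -> qval Y = qval X.
Proof.
move=> hX lX cX k; elim/ltn_ind: k => k IH Y t eY hY le.
case: (leqP t tau) => ht; first exact: backward hX cX hY ht le.
have [sx [zx [hsx [hzx [ex [vx [lzx czx]]]]]]] := origin_up hX lX.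
have [H _] := inv_all t.
have := H (Ordinal n_pos); rewrite hY.
case: (ltngtP (rd X) (rd Y)) le => // lt _.
- case=> [[e _]|[[e _]|[s [z [hs [Hz [H1 [H2 H3]]]]]]]].
  + by move: lt; rewrite e.
  + by move: lt; rewrite e -ex ltnS leqn0 => /eqP.
  + rewrite -H2; apply: (IH (rd z) _ z s erefl Hz); first by rewrite -eY -H1.
    by rewrite -ltnS H1.
- have lY : lvl Y.
    have := persistEq (@closed_Pup (rd X)) hX _ (ltnW ht) hY.
    by rewrite /Pup lt ltnn eqxx lX /= => /(_ isT).
  case=> [[_ l]|[[_ l]|[s [z [hs [Hz [H1 [H2 H3]]]]]]]]; try by rewrite l in lY.
  have [_ cz] := H3 lY.
  rewrite -H2 -vx; apply: eqval Hz hzx _ cz czx.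
  by apply: succn_inj; rewrite H1 ex lt.
Qed.

End Proof10.
Unset Implicit Arguments. Set Strict Implicit.

Theorem lemma10 (d : Order.disp_t) (V : orderType d) (bot : V)
  (bot_least : forall v : V, bot <= v)
  (n : nat) (n_pos : (0 < n)%N)
  (prop : 'I_n -> V) (sched : nat -> 'I_n)
  (tau tau' : nat) (X Y : quad V) :
  (forall i : 'I_n, REG (config_at bot prop sched tau) i = X) ->
  lvl X = up -> cfl X = false ->
  (forall i : 'I_n, REG (config_at bot prop sched tau') i = Y) ->
  (rd X <= rd Y)%N ->
  qval Y = qval X.
Proof.
move=> hX lX cX hY le.
apply: (forward n_pos hX _ _ (erefl (rd Y)) hY le).
- by rewrite lX.
- by rewrite cX.
Qed.
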